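(* Let $n\ge2$ and $W_n=(w_{ij},\ 1\le j<i\le n)$ be a triangular array of positive reals. Then $T_n=T^\triangle_n(W_n)$ satisfies $$\mathcal{E}^\triangle(T_n)=\sum_{1\le j<i\le n}\frac1{w_{ij}}.$$
   Context: Triangular arrays are $X=(x_{ij},\ 1\le j<i\le n)$ of positive reals. Local maps (same formulas as for matrices): for $i\ge3$, $l_{i1}$ replaces $x_{i1}$ by $x_{i-1,1}x_{i1}$; for $2\le j$ with $j+1<i$, $l_{ij}$ replaces $(x_{i-1,j-1},x_{i-1,j},x_{i,j-1},x_{ij})=(a,b,c,d)$ by $(bc/(ab+ac),b,c,d(b+c))$, other entries unchanged. For $1\le j\le n-2$ let $\rho^n_j=l_{n-j+1,1}\circ l_{n-j+2,2}\circ\cdots\circ l_{n-1,j-1}\circ l_{nj}$, and set $\rho^{\triangle,n}_j=\rho^n_j$. Let $r^\triangle_{n,n-1}$ replace $x_{n,n-1}$ by $1/x_{n,n-1}$. With conventions $x_{i0}=1$ and $x_{n+1,n-1}=1$: for $k=0,1,\dots,\lfloor n/2\rfloor-1$, $b^{\triangle,n}_{n-2k,n-2k-1}$ replaces $x_{n-2k,n-2k-1}$ by $x_{n-2k+1,n-2k-1}x_{n-2k,n-2k-2}/x_{n-2k,n-2k-1}$; for $k=1,\dots,\lfloor (n-1)/2\rfloor$, $b^{\triangle,n}_{n-2k+1,n-2k}$ is the identity. Set $\rho^{\triangle,n}_{n-1}=b^{\triangle,n}_{2,1}\circ\cdots\circ b^{\triangle,n}_{n-1,n-2}\circ b^{\triangle,n}_{n,n-1}\circ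 r^\triangle_{n,n-1}$ and $R^\triangle_n=\rho^{\triangle,n}_{n-1}\circ\cdots\circ\rho^{\triangle,n}_1$. Define $T^\triangle_2(x_{21})=x_{21}$ and for $n\ge3$, $T^\triangle_n(X_n)=R^\triangle_n\begin{pmatrix}T^\triangle_{n-1}(X_{n-1})\\ x_{n1}\ \cdots\ x_{n,n-1}\end{pmatrix}$, where $X_{n-1}=(x_{ij},\ 1\le j<i\le n-1)$ and the last row $(x_{n1},\dots,x_{n,n-1})$ is appended. For a triangular array, $\mathcal{E}^\triangle(X)=\frac1{x_{21}}+\sum_{1\le j<i\le n}\frac{x_{i-1,j}+x_{i,j-1}}{x_{ij}}$ with $x_{i0}=x_{ii}=0$ in this sum. *)

(* Defs.v *)
(* Triangular arrays are represented as total functions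
   X : nat -> nat -> R, of which only the entries X i j with 1 <= j < i <= n
   are meaningful (1-based indices as in the paper). *)
From mathcomp Require Import all_boot all_order all_algebra.
From mathcomp Require Import reals.
Set Implicit Arguments. Unset Strict Implicit. Unset Printing Implicit Defensive.
Import Order.TTheory GRing.Theory Num.Theory.
Local Open Scope ring_scope.

Section Tri.
Variable R : realFieldType.
Definition tarray := nat -> nat -> R.

Definition upd (x : tarray) (i j : nat) (v : R) : tarray :=
  fun a b => if (a == i) && (b == j) then v else x a b.

Definition lmap (i j : nat) (x : tarray) : tarray :=
  if j == 1%N then upd x i 1 (x i.-1 1%N * x i 1%N)
  else
    let a := x i.-1 j.-1 in let b := x i.-1 j in
    let c := x i j.-1 in let d := x i j in
    upd (upd x i.-1 j.-1 (b * c / (a * b + a * c))) i j (d * (b + c)).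

(* rho^n_j = l_{n-j+1,1} o l_{n-j+2,2} o ... o l_{nj}  (l_{nj} applied first) *)
Definition rho (n j : nat) (x : tarray) : tarray :=
  foldr (fun k acc => lmap (n - j + k) k acc) x (iota 1 j).

Definition rmap (n : nat) (x : tarray) : tarray :=
  upd x n n.-1 (1 / x n n.-1).

(* b^{triangle,n}_{i,i-1}, with conventions x_{i0} = 1 and x_{n+1,n-1} = 1;
   nontrivial exactly for i = n - 2k (i.e. i of the parity of n, 2 <= i <= n),
   identity otherwise. *)
Definition bmap (n i : nat) (x : tarray) : tarray :=
  if [&& odd i == odd n, (2 <= i)%N & (i <= n)%N] then
    let top := if i == n then 1 else x i.+1 i.-1 in
    let left := if i == 2%N then 1 else x i i.-2 in
    upd x i i.-1 (top * left / x i i.-1)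
  else x.

(* rho^{triangle,n}_{n-1} = b_{2,1} o ... o b_{n,n-1} o r_{n,n-1} *)
Definition rho_last (n : nat) (x : tarray) : tarray :=
  foldr (fun i acc => bmap n i acc) (rmap n x) (iota 2 n.-1).

Definition rhoT (n j : nat) (x : tarray) : tarray :=
  if j == n.-1 then rho_last n x else rho n j x.

Definition Rtri (n : nat) (x : tarray) : tarray :=
  foldl (fun acc j => rhoT n j acc) x (iota 1 n.-1).

Fixpoint Ttri (n : nat) (x : tarray) : tarray :=
  match n with
  | 0 | 1 | 2 => x
  | m.+1 => Rtri n (fun i j => if i == n then x i j else Ttri m x i j)
  end.

(* energy E^triangle, with x_{i0} = x_{ii} = 0 in the sum *)
Definition energy (n : nat) (x : tarray) : R :=
  1 / x 2%N 1%N +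
  \sum_(2 <= i < n.+1) \sum_(1 <= j < i)
     ((if j == i.-1 then 0 else x i.-1 j) + (if j == 1%N then 0 else x i j.-1)) / x i j.
End Tri.

(* Main.v *)
Require Import Defs.
From mathcomp Require Import all_boot all_order all_algebra.
From mathcomp Require Import reals.
From mathcomp Require Import zify ring lra.
From Stdlib Require Import FunctionalExtensionality.
Import Order.TTheory GRing.Theory Num.Theory.
Set Implicit Arguments. Unset Strict Implicit. Unset Printing Implicit Defensive.
Local Open Scope ring_scope.

Lemma sum_nat_pt (R : realFieldType) (a b i0 : nat) (F : nat -> R) :
  (a <= i0 < b)%N ->
  \sum_(a <= i < b) (if i == i0 then F i else 0) = F i0.
Proof.
move=> /andP[h1 h2].
rewrite (big_cat_nat (n:=i0)) //=; last by apply: ltnW.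
rewrite [X in _ + X]big_ltn // eqxx.
rewrite [X in X + _]big1_seq; last first.
  move=> i /andP[_]; rewrite mem_index_iota => /andP[_ hi].
  by case: eqP => // e; lia.
rewrite [X in _ + (_ + X)]big1_seq; last first.
  move=> i /andP[_]; rewrite mem_index_iota => /andP[hi _].
  by case: eqP => // e; lia.
by rewrite add0r addr0.
Qed.

Lemma sum_nat_pt0 (R : realFieldType) (a b i0 : nat) (F : nat -> R) :
  ~~ (a <= i0 < b)%N ->
  \sum_(a <= i < b) (if i == i0 then F i else 0) = 0.
Proof.
move=> h; rewrite big1_seq // => i; rewrite mem_index_iota => /andP[_ hi].
case: eqP => // e; subst; by rewrite hi in h.
Qed.

Definition inr (n i j : nat) : bool := [&& (1 <= j)%N, (j < i)%N & (i <= n)%N].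

Lemma sum2_pt (R : realFieldType) (n i0 j0 : nat) (v : R) :
  \sum_(2 <= i < n.+1) \sum_(1 <= j < i) (if (i == i0) && (j == j0) then v else 0)
  = if inr n i0 j0 then v else 0.
Proof.
under eq_bigr => i _.
  rewrite (_ : \sum_(1 <= j < i) _ = if i == i0 then
     \sum_(1 <= j < i) (if j == j0 then v else 0) else 0); last first.
    case: eqP => _ /=; first by [].
    by rewrite big1.
over.
rewrite /inr.
case h: (2 <= i0 < n.+1)%N.
  rewrite (@sum_nat_pt _ _ _ _ (fun i => \sum_(1 <= j < i) (if j == j0 then v else 0))) //.
  case h2: (1 <= j0 < i0)%N.
    rewrite sum_nat_pt //. move: h h2 => /andP[? ?] /andP[? ?].
    by rewrite (_ : [&& _, _ & _] = true) //; apply/and3P; split => //; lia.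
  rewrite sum_nat_pt0 ?h2 //.
  by case: and3P => // [[? ? ?]]; move/negbT: h2 => /negP; case; apply/andP; split.
rewrite sum_nat_pt0 ?h //.
case: and3P => // [[? ? ?]]; move/negbT: h => /negP; case; apply/andP; split => //; lia.
Qed.

Definition vert (R : realFieldType) (x : tarray R) (i j : nat) : R :=
  if j == i.-1 then 0 else x i.-1 j.
Definition hor (R : realFieldType) (x : tarray R) (i j : nat) : R :=
  if j == 1%N then 0 else x i j.-1.
Definition d21 (R : realFieldType) (i j : nat) : R :=
  if (i == 2%N) && (j == 1%N) then 1 else 0.
Definition Nf (R : realFieldType) (x : tarray R) (i j : nat) : R :=
  vert x i j + hor x i j + d21 R i j.
Definition msk (n k i j : nat) : bool := (i == n) && (k < j)%N.
Definition tt (R : realFieldType) (n k : nat) (x : tarray R) (i j : nat) : R :=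
  if msk n k i j then 1 / x i j else Nf x i j / x i j.
Definition Ek (R : realFieldType) (n k : nat) (x : tarray R) : R :=
  \sum_(2 <= i < n.+1) \sum_(1 <= j < i) tt n k x i j.
Definition posn (R : realFieldType) (n : nat) (x : tarray R) : Prop :=
  forall i j, (1 <= j)%N -> (j < i)%N -> (i <= n)%N -> 0 < x i j.

Lemma energy_Ek (R : realFieldType) (n : nat) (x : tarray R) :
  (2 <= n)%N -> energy n x = Ek n n.-1 x.
Proof.
move=> hn; rewrite /energy /Ek.
transitivity (\sum_(2 <= i < n.+1) \sum_(1 <= j < i)
   (((if j == i.-1 then 0 else x i.-1 j) + (if j == 1%N then 0 else x i j.-1)) / x i j
    + (if (i == 2%N) && (j == 1%N) then 1 / x 2%N 1%N else 0))).
  symmetry; under eq_bigr => i _ do rewrite big_split /=.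
  rewrite big_split /= sum2_pt /inr addrC.
  by rewrite (_ : [&& _, _ & _] = true) //; apply/and3P; split => //.
apply: eq_big_nat => i /andP[hi1 hi2]; apply: eq_big_nat => j /andP[hj1 hj2].
rewrite /tt /msk (_ : (n.-1 < j)%N = false); last by lia.
rewrite andbF /Nf /vert /hor /d21 mulrDl.
rewrite !mulrDl; case: (i =P 2%N) => [->|] /=; case: (j =P 1%N) => [->|] /=; by rewrite ?mul0r ?addr0 ?add0r ?mulrDl.
Qed.

Lemma Ek0 (R : realFieldType) (n : nat) (y : tarray R) :
  (3 <= n)%N -> Ek n 0 y = energy n.-1 y + \sum_(1 <= j < n) 1 / y n j.
Proof.
move=> hn; rewrite energy_Ek; last by lia.
rewrite /Ek big_nat_recr /=; last by lia.
rewrite (_ : n.-1.+1 = n); last by lia.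
congr (_ + _).
  apply: eq_big_nat => i /andP[hi1 hi2]; apply: eq_big_nat => j /andP[hj1 hj2].
  rewrite /tt /msk.
  have -> : (i == n) = false by apply/eqP; lia.
  have -> : (n.-1.-1 < j)%N = false by apply/negbTE; rewrite -leqNgt; lia.
  by rewrite andbF.
apply: eq_big_nat => j /andP[hj1 hj2].
by rewrite /tt /msk eqxx /= hj1.
Qed.

Lemma updE_eq (R : realFieldType) (x : tarray R) i m v : upd x i m v i m = v.
Proof. by rewrite /upd !eqxx. Qed.

Lemma updE_ne (R : realFieldType) (x : tarray R) i m v a b :
  (a != i) || (b != m) -> upd x i m v a b = x a b.
Proof. by rewrite /upd; case/orP => /negbTE ->; rewrite ?andbF. Qed.

Lemma tt_upd_far (R : realFieldType) n k (x : tarray R) i m v a b :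
  (1 <= b)%N -> (2 <= a)%N -> (a != i) || (b != m) ->
  (a.-1 != i) || (b != m) -> (a != i) || (b.-1 != m) ->
  tt n k (upd x i m v) a b = tt n k x a b.
Proof.
move=> hb ha h1 h2 h3.
by rewrite /tt /Nf /vert /hor !updE_ne.
Qed.

Lemma Ek_upd (R : realFieldType) n k (x : tarray R) i m v :
  (1 <= m)%N -> (m < i)%N -> (i <= n)%N ->
  ~~ msk n k i m -> ~~ msk n k i m.+1 -> ~~ msk n k i.+1 m ->
  Ek n k (upd x i m v) = Ek n k x + (Nf x i m / v - Nf x i m / x i m)
     + (if (m.+1 < i)%N then (v - x i m) / x i m.+1 else 0)
     + (if (i < n)%N then (v - x i m) / x i.+1 m else 0).
Proof.
move=> hm hmi hin hP hR hD.
set c1 := (Nf x i m / v - Nf x i m / x i m).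
set c2 := (v - x i m) / x i m.+1.
set c3 := (v - x i m) / x i.+1 m.
have h1 : inr n i m by rewrite /inr hm hmi hin.
have h2 : inr n i m.+1 = (m.+1 < i)%N by rewrite /inr hin andbT.
have h3 : inr n i.+1 m = (i < n)%N by rewrite /inr hm ltnS (ltnW hmi).
have e1 := sum2_pt n i m c1; rewrite h1 in e1.
have e2 := sum2_pt n i m.+1 c2; rewrite h2 in e2.
have e3 := sum2_pt n i.+1 m c3; rewrite h3 in e3.
rewrite -e1 -e2 -e3 /Ek -!big_split /=.
apply: eq_big_nat => a /andP[ha1 ha2].
rewrite -!big_split /=.
apply: eq_big_nat => b /andP[hb1 hb2].
have [/andP[/eqP ea /eqP eb]|nA] := boolP ((a == i) && (b == m)).
  subst a b.
  have -> : (i == i) && (m == m.+1) = false by rewrite eqxx /=; apply/eqP; lia.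
  have -> : (i == i.+1) && (m == m) = false by rewrite eqxx andbT; apply/eqP; lia.
  rewrite !addr0 /tt (negbTE hP) updE_eq /Nf /vert /hor !updE_ne;
    try (apply/orP; left; apply/eqP; lia); try (apply/orP; right; apply/eqP; lia).
  by rewrite /c1 /Nf /vert /hor [RHS]addrC subrK.
have [/andP[/eqP ea /eqP eb]|nB] := boolP ((a == i) && (b == m.+1)).
  subst a b.
  rewrite (_ : (i == i.+1) = false) /=; last by apply/eqP; lia.
  rewrite !addr0 /tt (negbTE hR) /Nf /vert /hor.
  rewrite (updE_ne _ _ _ (a := i) (b := m.+1)); last by apply/orP; right; apply/eqP; lia.
  rewrite (_ : (m.+1 == 1%N) = false) /=; last by apply/eqP; lia.
  rewrite updE_eq.
  case: ifP => [_|hc].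
    by rewrite /c2; ring.
  rewrite updE_ne; last by apply/orP; left; apply/eqP; lia.
  by rewrite /c2; ring.
have [/andP[/eqP ea /eqP eb]|nC] := boolP ((a == i.+1) && (b == m)).
  subst a b.
  rewrite ?addr0 ?add0r /tt (negbTE hD) /Nf /vert /hor.
  rewrite (updE_ne _ _ _ (a := i.+1) (b := m)); last by apply/orP; left; apply/eqP; lia.
  rewrite (_ : (m == i.+1.-1) = false) /=; last by apply/eqP; lia.
  rewrite updE_eq.
  case: ifP => [_|hc].
    by rewrite /c3; ring.
  rewrite updE_ne; last by apply/orP; right; apply/eqP; lia.
  by rewrite /c3; ring.
rewrite !addr0.
have g1 : (a != i) || (b != m) by rewrite -negb_and.
have g2 : (a.-1 != i) || (b != m).
  case: (a.-1 =P i) => [e|] //=; apply/eqP => eb; move: nC.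
  by rewrite (_ : a = i.+1) ?eb ?eqxx //; lia.
have g3 : (a != i) || (b.-1 != m).
  case: (a =P i) => [e|] //=; apply/eqP => eb; move: nB.
  by rewrite e (_ : b = m.+1) ?eqxx //; lia.
by apply: tt_upd_far.
Qed.

Lemma Ek_act (R : realFieldType) n k (x : tarray R) :
  (1 <= k)%N -> (k < n)%N -> x n k != 0 -> Nf x n k != 0 ->
  Ek n k (upd x n k (x n k * Nf x n k)) = Ek n k.-1 x.
Proof.
move=> hk hkn hx hN.
apply: eq_big_nat => a /andP[ha1 ha2]; apply: eq_big_nat => b /andP[hb1 hb2].
have [/andP[/eqP ea /eqP eb]|nA] := boolP ((a == n) && (b == k)).
  subst a b.
  rewrite /tt /msk eqxx ltnn /= (_ : (k.-1 < k)%N = true); last by lia.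
  rewrite updE_eq /Nf /vert /hor !updE_ne;
    try (apply/orP; left; apply/eqP; lia); try (apply/orP; right; apply/eqP; lia).
  rewrite -/(vert x n k) -/(hor x n k) -/(Nf x n k).
  by field; apply/andP; split.
have [/andP[/eqP ea hb]|nM] := boolP ((a == n) && (k < b)%N).
  subst a.
  rewrite /tt /msk eqxx hb (_ : (k.-1 < b)%N = true) /=; last by lia.
  by rewrite updE_ne // -negb_and.
have m1 : msk n k a b = false by apply/negbTE.
have m2 : msk n k.-1 a b = false.
  rewrite /msk; case: (a =P n) => [e|] //=; subst a; apply/negbTE; rewrite -leqNgt.
  move: nA nM; rewrite eqxx /= => nA nM; move: nA; rewrite -leqNgt in nM; lia.
rewrite /tt m1 m2 /Nf /vert /hor.
rewrite !updE_ne //; first by rewrite -negb_and.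
- case: (a =P n) => [e|] //=; subst a; apply/eqP => e; move: nM nA.
  by rewrite eqxx /= (_ : (k < b)%N = true) //; lia.
- apply/orP; left; apply/eqP; lia.
Qed.

Lemma swap_id (R : realFieldType) (a b c N : R) :
  0 < a -> 0 < b -> 0 < c -> 0 < N ->
  N / (b * c / (a * b + a * c) * N) - N / a
  + (b * c / (a * b + a * c) * N - a) / b + (b * c / (a * b + a * c) * N - a) / c = 0.
Proof.
move=> ha hb hc hN.
have h1 : a * b + a * c != 0 by apply: lt0r_neq0; apply: addr_gt0; apply: mulr_gt0.
field; by rewrite ?h1 ?lt0r_neq0 //=.
Qed.

Lemma swap1_id (R : realFieldType) (a t N : R) :
  0 < a -> 0 < t -> 0 < N ->
  N / (t * N / a) - N / a + (t * N / a - a) / t = 0.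
Proof.
move=> ha ht hN.
field; by rewrite !lt0r_neq0.
Qed.

Lemma posn_upd (R : realFieldType) n (x : tarray R) i j v :
  posn n x -> 0 < v -> posn n (upd x i j v).
Proof.
move=> hx hv a b h1 h2 h3; rewrite /upd; case: ifP => // _; exact: hx.
Qed.

Lemma Nf_gt0 (R : realFieldType) n (x : tarray R) i j :
  posn n x -> (1 <= j)%N -> (j < i)%N -> (i <= n)%N -> 0 < Nf x i j.
Proof.
move=> hx hj hji hin.
have hv : 0 <= vert x i j.
  rewrite /vert; case: eqP => // e; apply: ltW; apply: hx => //; lia.
have hh : 0 <= hor x i j.
  rewrite /hor; case: eqP => // e; apply: ltW; apply: hx => //; lia.
have hd : 0 <= d21 R i j by rewrite /d21; case: ifP.
rewrite /Nf.
case: (j =P i.-1) => e.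
  case: (j =P 1%N) => e1.
    have -> : d21 R i j = 1 by rewrite /d21 e1 (_ : i = 2%N) ?eqxx //; lia.
    by apply: ltr_wpDl => //; apply: addr_ge0.
  apply: ltr_wpDr => //; apply: ltr_wpDl => //.
  rewrite /hor; case: eqP => // _; apply: hx => //; lia.
apply: ltr_wpDr => //; apply: ltr_wpDr => //.
rewrite /vert; case: eqP => // _; apply: hx => //; lia.
Qed.

Definition Ud (R : realFieldType) (i j : nat) (x : tarray R) : tarray R :=
  upd x i j (x i j * Nf x i j).

Lemma lmap_S (R : realFieldType) (x : tarray R) i m :
  (1 <= m)%N -> (m.+1 < i)%N ->
  lmap i.+1 m.+1 x = upd (Ud i.+1 m.+1 x) i m
     (x i m.+1 * x i.+1 m / (x i m * x i m.+1 + x i m * x i.+1 m)).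
Proof.
move=> hm hmi; rewrite /lmap /Ud /Nf /vert /hor /d21 /=.
rewrite (_ : (m.+1 == i) = false); last by apply/eqP; lia.
rewrite (_ : (m.+1 == 1%N) = false) /=; last by apply/eqP; lia.
rewrite (_ : (i.+1 == 2%N) = false) /=; last by apply/eqP; lia.
rewrite addr0; apply: functional_extensionality => a; apply: functional_extensionality => b.
rewrite /upd; case: (a =P i.+1) => [ea|na]; case: (b =P m.+1) => [eb|nb];
  case: (a =P i) => [ea'|na']; case: (b =P m) => [eb'|nb'] //=; lia.
Qed.

Lemma lmap_1 (R : realFieldType) (x : tarray R) i :
  (2 < i)%N -> lmap i 1 x = Ud i 1 x.
Proof.
move=> hi; rewrite /lmap /Ud /Nf /vert /hor /d21 /=.
rewrite (_ : (1 == i.-1) = false) /=; last by apply/eqP; lia.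
by rewrite (_ : (i == 2%N) = false) ?addr0 1?mulrC //; apply/eqP; lia.
Qed.

Lemma Nf_upd_same (R : realFieldType) (x : tarray R) i m v :
  (1 <= m)%N -> (m < i)%N -> Nf (upd x i m v) i m = Nf x i m.
Proof.
move=> hm hmi; rewrite /Nf /vert /hor !updE_ne //;
  try (apply/orP; left; apply/eqP; lia); try (apply/orP; right; apply/eqP; lia).
Qed.

Lemma upd_upd (R : realFieldType) (x : tarray R) i m v w :
  upd (upd x i m v) i m w = upd x i m w.
Proof.
apply: functional_extensionality => a; apply: functional_extensionality => b.
rewrite /upd; by case: ((a == i) && (b == m)).
Qed.

Lemma rho_step (R : realFieldType) n k (x : tarray R) :
  (1 <= k)%N -> (k.+2 <= n)%N -> posn n x ->
  posn n (rho n k x) /\ Ek n k (rho n k x) = Ek n k.-1 x.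
Proof.
move=> hk hkn hx.
pose f := fun (m : nat) (acc : tarray R) => lmap (n - k + m) m acc.
pose Y := fun t => foldr f x (iota (k.+1 - t) t).
have Q : forall t, (t < k)%N ->
    posn n (Y t) /\ Ek n k (Ud (n - t) (k - t) (Y t)) = Ek n k.-1 x.
  elim => [_|t IH ht].
    split; first by [].
    rewrite !subn0 /Ud; apply: Ek_act => //; first by lia.
      by apply: lt0r_neq0; apply: hx => //; lia.
    by apply: lt0r_neq0; apply: Nf_gt0 hx _ _ _ => //; lia.
  have [hp he] := IH (ltnW ht).
  set W := Ud (n - t) (k - t) (Y t).
  have hW : posn n W.
    apply: posn_upd => //; apply: mulr_gt0; first by apply: hp => //; lia.
    by apply: Nf_gt0 hp _ _ _ => //; lia.
  have eY : Y t.+1 = f (k - t)%N (Y t).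
    rewrite /Y (_ : (k.+1 - t.+1 = k - t)%N); last by lia.
    by rewrite (_ : (k.+1 - t = (k - t).+1)%N) //; lia.
  set i := (n - t.+1)%N; set m := (k - t.+1)%N.
  have hm : (1 <= m)%N by rewrite /m; lia.
  have hmi : (m.+1 < i)%N by rewrite /m /i; lia.
  have hin : (i < n)%N by rewrite /i; lia.
  have e1 : (n - k + (k - t) = i.+1)%N by rewrite /i; lia.
  have e2 : (k - t = m.+1)%N by rewrite /m; lia.
  have eW : W = Ud i.+1 m.+1 (Y t) by rewrite /W -e2 (_ : (n - t = i.+1)%N) //; rewrite /i; lia.
  have eY2 : Y t.+1 = upd W i m
     (W i m.+1 * W i.+1 m / (W i m * W i m.+1 + W i m * W i.+1 m)).
    rewrite eY /f e1 e2 lmap_S // eW /Ud !updE_ne //;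
      try (apply/orP; left; apply/eqP; lia); try (apply/orP; right; apply/eqP; lia).
  have ha : 0 < W i m by apply: hW => //; lia.
  have hb : 0 < W i m.+1 by apply: hW => //; lia.
  have hc : 0 < W i.+1 m by apply: hW => //; lia.
  have hN : 0 < Nf W i m by apply: Nf_gt0 hW _ _ _ => //; lia.
  have hA : 0 < W i m.+1 * W i.+1 m / (W i m * W i m.+1 + W i m * W i.+1 m).
    by apply: divr_gt0; [apply: mulr_gt0|apply: addr_gt0; apply: mulr_gt0].
  split; first by rewrite eY2; apply: posn_upd.
  rewrite eY2 /Ud updE_eq Nf_upd_same //; try lia.
  rewrite upd_upd Ek_upd //; try lia; rewrite ?hmi ?hin.
  - by rewrite he -[RHS]addr0 -(swap_id ha hb hc hN); ring.
  - by rewrite /msk (_ : (i == n) = false) //; apply/eqP; lia.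
  - by rewrite /msk (_ : (i == n) = false) //; apply/eqP; lia.
  - by rewrite /msk (_ : (k < m)%N = false) ?andbF //; apply/negbTE; rewrite -leqNgt; lia.
have [hp he] := Q k.-1 (ltac:(lia)).
have eR : rho n k x = Ud (n - k.-1) (k - k.-1) (Y k.-1).
  rewrite /rho -/f (_ : iota 1 k = 1%N :: iota 2 k.-1); last first.
    by rewrite (_ : k = k.-1.+1) //; lia.
  rewrite /= {1}/f (_ : (n - k + 1 = n - k.-1)%N); last by lia.
  rewrite lmap_1; last by lia.
  rewrite /Y (_ : (k.+1 - k.-1 = 2)%N); last by lia.
  by rewrite (_ : (k - k.-1 = 1)%N) //; lia.
rewrite eR; split => //.
apply: posn_upd => //; apply: mulr_gt0; first by apply: hp => //; lia.
by apply: Nf_gt0 hp _ _ _ => //; lia.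
Qed.

Lemma rho_last_step (R : realFieldType) n (x : tarray R) :
  (3 <= n)%N -> posn n x ->
  posn n (rho_last n x) /\ Ek n n.-1 (rho_last n x) = Ek n n.-2 x.
Proof.
move=> hn hx.
pose g := fun (i : nat) (acc : tarray R) => bmap n i acc.
pose B := fun t => foldr g (rmap n x) (iota (n.+1 - t) t).
have Q : forall t, (1 <= t)%N -> (t <= n.-1)%N ->
    posn n (B t) /\ Ek n n.-1 (B t) = Ek n n.-2 x.
  elim => [//|t IH _ ht].
  have hx1 : 0 < x n n.-1 by apply: hx => //; lia.
  have hx2 : 0 < x n n.-2 by apply: hx => //; lia.
  case: (posnP t) => [t0|tpos].
    subst t.
    have eB : B 1%N = Ud n n.-1 x.
      rewrite /B (_ : (n.+1 - 1 = n)%N) /=; last by lia.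
      rewrite /g /bmap eqxx leqnn (_ : (2 <= n)%N) /=; last by lia.
      rewrite (_ : (n == 2%N) = false); last by apply/eqP; lia.
      rewrite eqxx mul1r /rmap upd_upd updE_ne; last by apply/orP; right; apply/eqP; lia.
      rewrite updE_eq /Ud /Nf /vert /hor /d21 eqxx (_ : (n.-1 == 1%N) = false); last by apply/eqP; lia.
      rewrite (_ : (n == 2%N) = false) /=; last by apply/eqP; lia.
      congr (upd _ _ _ _); rewrite add0r addr0 mul1r; field.
      by rewrite lt0r_neq0.
    rewrite eB; split.
      apply: posn_upd => //; apply: mulr_gt0 => //.
      by apply: Nf_gt0 hx _ _ _ => //; lia.
    rewrite /Ud Ek_act //; first by lia.
      by rewrite lt0r_neq0.
    by rewrite lt0r_neq0 //; apply: Nf_gt0 hx _ _ _ => //; lia.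
  have [hp he] := IH tpos (ltnW ht).
  set i := (n - t)%N.
  have eB : B t.+1 = bmap n i (B t).
    rewrite /B (_ : (n.+1 - t.+1 = i)%N); last by rewrite /i; lia.
    by rewrite (_ : (n.+1 - t = i.+1)%N) //; rewrite /i; lia.
  have hi2 : (2 <= i)%N by rewrite /i; lia.
  have hin : (i < n)%N by rewrite /i; lia.
  rewrite eB /bmap (_ : (i <= n)%N) ?hi2 /=; last by lia.
  case: (odd i == odd n) => //=.
  rewrite (_ : (i == n) = false); last by apply/eqP; lia.
  set left := (if i == 2%N then 1 else B t i i.-2).
  have ha : 0 < B t i i.-1 by apply: hp => //; lia.
  have htop : 0 < B t i.+1 i.-1 by apply: hp => //; lia.
  have eN : Nf (B t) i i.-1 = left.
    rewrite /Nf /vert /hor /d21 /left eqxx add0r.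
    case: (i =P 2%N) => [->|ni] /=; first by rewrite add0r.
    rewrite (_ : (i.-1 == 1%N) = false) ?addr0 //; apply/eqP; lia.
  have hN : 0 < left by rewrite -eN; apply: Nf_gt0 hp _ _ _ => //; lia.
  split.
    apply: posn_upd => //; apply: divr_gt0 => //; exact: mulr_gt0.
  rewrite Ek_upd //; try lia.
  - rewrite (_ : (i.-1.+1 < i)%N = false); last by apply/negbTE; rewrite -leqNgt; lia.
    rewrite hin.
    rewrite eN -he addr0 -[RHS]addr0 -(swap1_id ha htop hN); ring.
  - by rewrite /msk (_ : (i == n) = false) //; apply/eqP; lia.
  - by rewrite /msk (_ : (i == n) = false) //; apply/eqP; lia.
  - by rewrite /msk (_ : (n.-1 < i.-1)%N = false) ?andbF //; apply/negbTE; rewrite -leqNgt; lia.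
have [hp he] := Q n.-1 ltac:(lia) (leqnn _).
have -> : rho_last n x = B n.-1.
  by rewrite /rho_last /B (_ : (n.+1 - n.-1 = 2)%N) //; lia.
by [].
Qed.

Lemma Rtri_step (R : realFieldType) n (x : tarray R) :
  (3 <= n)%N -> posn n x ->
  posn n (Rtri n x) /\ Ek n n.-1 (Rtri n x) = Ek n 0 x.
Proof.
move=> hn hx.
pose h := fun (acc : tarray R) (j : nat) => rhoT n j acc.
pose F := fun k => foldl h x (iota 1 k).
have eF : forall k, F k.+1 = h (F k) k.+1.
  move=> k; rewrite /F; have := iotaD 1 k 1; rewrite addn1 add1n => ->; by rewrite foldl_cat.
have Q : forall k, (k <= n.-2)%N -> posn n (F k) /\ Ek n k (F k) = Ek n 0 x.
  elim => [_|k IH hk]; first by [].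
  have [hp he] := IH (ltnW hk).
  rewrite eF /h /rhoT (_ : (k.+1 == n.-1) = false); last by apply/eqP; lia.
  have [hp' he'] := rho_step (n:=n) (k:=k.+1) (ltac:(lia)) (ltac:(lia)) hp.
  by split => //; rewrite he'.
have [hp he] := Q n.-2 (leqnn _).
have -> : Rtri n x = h (F n.-2) n.-1.
  by rewrite /Rtri -/h (_ : n.-1 = n.-2.+1) -?eF //; lia.
rewrite /h /rhoT eqxx.
have [hp' he'] := rho_last_step hn hp.
by split => //; rewrite he'.
Qed.

Lemma energy_ext (R : realFieldType) N (x y : tarray R) :
  (2 <= N)%N -> (forall i j, (i <= N)%N -> x i j = y i j) -> energy N x = energy N y.
Proof.
move=> hN e; rewrite /energy !e //; congr (_ + _).
apply: eq_big_nat => i /andP[hi1 hi2]; apply: eq_big_nat => j _.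
by rewrite !e //; lia.
Qed.

Lemma main_aux (R : realFieldType) m (w : tarray R) :
  posn m.+2 w -> posn m.+2 (Ttri m.+2 w) /\
  energy m.+2 (Ttri m.+2 w) = \sum_(2 <= i < m.+3) \sum_(1 <= j < i) 1 / w i j.
Proof.
elim: m => [|m IH] hw.
  split => //.
  by rewrite /energy /= !big_nat1 /= !addr0 mul0r addr0.
have hw' : posn m.+2 w by move=> i j h1 h2 h3; apply: hw => //; lia.
have [hp he] := IH hw'.
pose y := fun i j => if i == m.+3 then w i j else Ttri m.+2 w i j.
have -> : Ttri m.+3 w = Rtri m.+3 y by [].
have hy : posn m.+3 y.
  move=> i j h1 h2 h3; rewrite /y; case: eqP => [_|ne]; first exact: hw.
  by apply: hp => //; lia.
have [hp2 he2] := Rtri_step (n:=m.+3) (ltac:(lia)) hy.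
split => //.
rewrite energy_Ek // he2 Ek0 //=.
rewrite (@energy_ext _ _ y (Ttri m.+2 w)) //; last first.
  by move=> i j hi; rewrite /y (_ : (i == m.+3) = false) //; apply/eqP; lia.
rewrite he [in RHS]big_nat_recr //=; congr (_ + _).
by apply: eq_big_nat => j _; rewrite /y eqxx.
Qed.

Unset Implicit Arguments.
Set Strict Implicit.

Theorem theorem6p1 (R : realType) (n : nat) (w : tarray R) :
  (2 <= n)%N ->
  (forall i j : nat, (1 <= j)%N -> (j < i)%N -> (i <= n)%N -> 0 < w i j) ->
  energy n (Ttri n w) = \sum_(2 <= i < n.+1) \sum_(1 <= j < i) 1 / w i j.
Proof.
case: n => [//|[//|m]] _ hw.
by have [_ ->] := @main_aux R m w hw.
Qed.
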